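(* Let $Y\sim N(\theta,\sigma^2)$ with $\sigma>0$, let $\tau\ge1$, and let $\theta_0=E_0(Y^2-\sigma^2\tau)_+$, where $E_0$ denotes expectation under $\theta=0$. Then $$\big(E(Y^2-\sigma^2\tau)_+-\theta_0\big)^2\le\max\Big\{6\sigma^2\theta^2+\sigma^4\frac{4\tau^{1/2}+18}{e^{\tau/2}},\;10\theta^4\Big\}.$$
   Context: $x_+=\max\{x,0\}$. *)

(* Defs.v *)
From Stdlib Require Import Reals Lra.
Open Scope R_scope.

Definition pos_part (x : R) : R := Rmax x 0.

Definition normal_density (theta sigma : R) (y : R) : R :=
  exp (- (y - theta) ^ 2 / (2 * sigma ^ 2)) / (sigma * sqrt (2 * PI)).

Definition improper_integral_R (f : R -> R) (l : R) : Prop :=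
  forall eps : R, 0 < eps ->
    exists M : R, forall a b : R, a <= - M -> M <= b ->
      exists pr : Riemann_integrable f a b, Rabs (RiemannInt pr - l) < eps.

Definition normal_expectation (theta sigma : R) (g : R -> R) (l : R) : Prop :=
  improper_integral_R (fun y => g y * normal_density theta sigma y) l.

(* Main.v *)
Require Import Defs.
From Stdlib Require Import Reals Lra.
From Coquelicot Require Import Coquelicot.
Open Scope R_scope.

Definition ex2 (s z : R) := exp (- (z - 0) ^ 2 / (2 * s ^ 2)).

Lemma exp_eq u v : u = v -> exp u = exp v.
Proof. intros ->; reflexivity. Qed.

Ltac fixe t := repeat match goal with |- context [exp ?u] =>
   assert_fails (constr_eq u t); rewrite (exp_eq u t) by (field; lra) end.

Lemma cont_der (f : R -> R) x : ex_derive f x -> continuous f x.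
Proof. intros H. exact (@ex_derive_continuous R_AbsRing R_NormedModule f x H). Qed.

Lemma sqrt2PI_pos : 0 < sqrt (2 * PI).
Proof. apply sqrt_lt_R0. pose proof PI_RGT_0. lra. Qed.

Lemma is_RInt_znd s a b : 0 < s ->
  is_RInt (fun z => z * normal_density 0 s z) a b
    (s ^ 2 / (s * sqrt (2 * PI)) * (ex2 s a - ex2 s b)).
Proof.
  intros Hs.
  pose proof sqrt2PI_pos.
  set (F := fun z => - (s ^ 2 / (s * sqrt (2 * PI))) * ex2 s z).
  replace (s ^ 2 / (s * sqrt (2 * PI)) * (ex2 s a - ex2 s b))
    with (minus (F b) (F a)).
  2:{ unfold F, minus, plus, opp; simpl. ring. }
  apply (is_RInt_derive F).
  - intros x _. unfold F, ex2, normal_density. auto_derive. trivial.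
    fixe (- (x - 0) ^ 2 / (2 * s ^ 2)). field. split; lra.
  - intros x _. apply cont_der. unfold normal_density. auto_derive. split; lra.
Qed.

Lemma lin2 (f g : R -> R) a b lf lg (al be : R) :
  is_RInt f a b lf -> is_RInt g a b lg ->
  is_RInt (fun z => al * f z + be * g z) a b (al * lf + be * lg).
Proof.
  intros Hf Hg.
  exact (is_RInt_plus _ _ a b _ _ (is_RInt_scal _ a b al lf Hf) (is_RInt_scal _ a b be lg Hg)).
Qed.

Lemma nd_cont s th x : 0 < s -> continuous (normal_density th s) x.
Proof.
  intros Hs. pose proof sqrt2PI_pos. apply cont_der. unfold normal_density. auto_derive. split; lra.
Qed.

Lemma nd_ex s th a b : 0 < s -> ex_RInt (normal_density th s) a b.
Proof. intros Hs. apply (@ex_RInt_continuous R_CompleteNormedModule). intros; now apply nd_cont. Qed.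

Lemma exp_poly u : 0 <= u -> exp (- u) <= 1 - u + u ^ 2 / 2.
Proof.
  intros Hu.
  set (h := fun v => 1 - v + v ^ 2 / 2 - exp (- v)).
  assert (HI : is_RInt (fun v => -1 + v + exp (- v)) 0 u (minus (h u) (h 0))).
  { apply (is_RInt_derive h).
    - intros x _. unfold h. auto_derive. trivial. field.
    - intros x _. apply cont_der. auto_derive. trivial. }
  assert (H0 : 0 <= RInt (fun v => -1 + v + exp (- v)) 0 u).
  { apply RInt_ge_0; auto. eexists; eauto.
    intros x _. pose proof (exp_ineq1_le (- x)). lra. }
  rewrite (is_RInt_unique _ _ _ _ HI) in H0.
  unfold h, minus, plus, opp in H0; simpl in H0. rewrite Ropp_0, exp_0 in H0. lra.
Qed.

Lemma nd0_eq s z : normal_density 0 s z = / (s * sqrt (2 * PI)) * ex2 s z.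
Proof. unfold normal_density, ex2, Rdiv. ring. Qed.

Lemma exp98 : exp (- (9 / 8)) <= (64 / 73) ^ 8.
Proof.
  assert (E : exp (9/8) = exp (9/64) ^ 8).
  { replace (9/8) with (9/64 + 9/64 + 9/64 + 9/64 + 9/64 + 9/64 + 9/64 + 9/64) by field.
    rewrite !exp_plus. ring. }
  assert (H1 : (1 + 9/64) ^ 8 <= exp (9/64) ^ 8).
  { apply pow_incr. split. lra. apply exp_ineq1_le. }
  rewrite exp_Ropp, E.
  replace ((64/73)^8) with (/ ((1 + 9/64) ^ 8)) by (field).
  apply Rinv_le_contravar; auto. apply pow_lt; lra.
Qed.

Lemma ex2_pos s z : 0 < ex2 s z.
Proof. apply exp_pos. Qed.

Lemma mid s : 0 < s ->
  RInt (normal_density 0 s) (- (3/2*s)) (3/2*s) <=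
    s / (s * sqrt (2 * PI)) * (3 - 9/8 + 243/640).
Proof.
  intros Hs. pose proof sqrt2PI_pos as Hp.
  set (c := / (s * sqrt (2 * PI))).
  assert (Hc : 0 < c) by (unfold c; apply Rinv_0_lt_compat; nra).
  set (G := fun z => c * (z - z ^ 3 / (6 * s ^ 2) + z ^ 5 / (40 * s ^ 4))).
  set (g := fun z => c * (1 - z ^ 2 / (2 * s ^ 2) + z ^ 4 / (8 * s ^ 4))).
  assert (HI : is_RInt g (- (3/2*s)) (3/2*s) (minus (G (3/2*s)) (G (- (3/2*s))))).
  { apply (is_RInt_derive G).
    - intros x _. unfold G, g. auto_derive. trivial. field. lra.
    - intros x _. apply cont_der. unfold g. auto_derive. split; lra. }
  apply Rle_trans with (RInt g (- (3/2*s)) (3/2*s)).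
  - apply RInt_le. lra. apply nd_ex; lra. eexists; eauto.
    intros x _. rewrite nd0_eq. fold c. unfold g. apply Rmult_le_compat_l. lra.
    unfold ex2.
    replace (- (x - 0) ^ 2 / (2 * s ^ 2)) with (- ((x - 0) ^ 2 / (2 * s ^ 2))) by (field; lra).
    eapply Rle_trans. apply exp_poly.
    apply Rmult_le_pos. nra. left; apply Rinv_0_lt_compat; nra.
    right. field. lra.
  - rewrite (is_RInt_unique _ _ _ _ HI). unfold G, minus, plus, opp; simpl.
    unfold c. right. field. split; lra.
Qed.

Lemma tailR s K : 0 < s -> 3/2*s <= K ->
  RInt (normal_density 0 s) (3/2*s) K <= s / (s * sqrt (2 * PI)) * (2/3) * exp (- (9/8)).
Proof.
  intros Hs HK. pose proof sqrt2PI_pos as Hp.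
  set (c := / (s * sqrt (2 * PI))).
  assert (Hc : 0 < c) by (unfold c; apply Rinv_0_lt_compat; nra).
  pose proof (is_RInt_scal _ _ _ (/ (3/2*s)) _ (is_RInt_znd s (3/2*s) K Hs)) as HI.
  apply Rle_trans with (RInt (fun y => / (3 / 2 * s) * (y * normal_density 0 s y)) (3/2*s) K).
  - apply RInt_le. lra. apply nd_ex; lra. eexists; eauto.
    intros x Hx.
    pose proof (ex2_pos s x). rewrite nd0_eq. fold c.
    assert (1 <= / (3/2*s) * x).
    { apply (Rmult_le_reg_l (3/2*s)). lra. rewrite <- Rmult_assoc, Rinv_r by lra. lra. }
    assert (0 < c * ex2 s x) by (apply Rmult_lt_0_compat; auto).
    nra.
  - rewrite (is_RInt_unique (fun y => / (3 / 2 * s) * (y * normal_density 0 s y)) _ _ _ HI). unfold scal; simpl; unfold mult; simpl.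
    pose proof (ex2_pos s K).
    replace (ex2 s (3/2*s)) with (exp (- (9/8))).
    2:{ unfold ex2. apply exp_eq. field. lra. }
    pose proof (exp_pos (- (9/8))).
    fold c. replace (s / (s * sqrt (2 * PI))) with (s * c) by (unfold c, Rdiv; ring).
    replace (s * (s * 1) / (s * sqrt (2 * PI))) with (s * s * c) by (unfold c; field; repeat split; lra).
    replace (/ (3 / 2 * s) * (s * s * c * (exp (- (9 / 8)) - ex2 s K))) with
      (s * c * (2/3) * (exp (- (9 / 8)) - ex2 s K)) by (field; lra).
    assert (0 < s * c) by nra. nra.
Qed.

Lemma tailL s K : 0 < s -> 3/2*s <= K ->
  RInt (normal_density 0 s) (- K) (- (3/2*s)) <= s / (s * sqrt (2 * PI)) * (2/3) * exp (- (9/8)).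
Proof.
  intros Hs HK. pose proof sqrt2PI_pos as Hp.
  set (c := / (s * sqrt (2 * PI))).
  assert (Hc : 0 < c) by (unfold c; apply Rinv_0_lt_compat; nra).
  pose proof (is_RInt_scal _ _ _ (- / (3/2*s)) _ (is_RInt_znd s (- K) (- (3/2*s)) Hs)) as HI.
  apply Rle_trans with (RInt (fun y => - / (3 / 2 * s) * (y * normal_density 0 s y)) (- K) (- (3/2*s))).
  - apply RInt_le. lra. apply nd_ex; lra. eexists; eauto.
    intros x Hx.
    pose proof (ex2_pos s x). rewrite nd0_eq. fold c.
    assert (1 <= - / (3/2*s) * x).
    { apply (Rmult_le_reg_l (3/2*s)). lra.
      replace (3 / 2 * s * (- / (3 / 2 * s) * x)) with (- x) by (field; lra). lra. }
    assert (0 < c * ex2 s x) by (apply Rmult_lt_0_compat; auto).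
    nra.
  - rewrite (is_RInt_unique (fun y => - / (3 / 2 * s) * (y * normal_density 0 s y)) _ _ _ HI). unfold scal; simpl; unfold mult; simpl.
    pose proof (ex2_pos s (- K)).
    replace (ex2 s (- (3/2*s))) with (exp (- (9/8))).
    2:{ unfold ex2. apply exp_eq. field. lra. }
    pose proof (exp_pos (- (9/8))).
    fold c. replace (s / (s * sqrt (2 * PI))) with (s * c) by (unfold c, Rdiv; ring).
    replace (s * (s * 1) / (s * sqrt (2 * PI))) with (s * s * c) by (unfold c; field; repeat split; lra).
    replace (- / (3 / 2 * s) * (s * s * c * (ex2 s (- K) - exp (- (9 / 8))))) with
      (s * c * (2/3) * (exp (- (9 / 8)) - ex2 s (- K))) by (field; lra).
    assert (0 < s * c) by nra. nra.
Qed.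

Definition Tc := 3 - 9/8 + 243/640 + 4/3 * exp (- (9/8)).

Lemma Tc_bound : Tc <= 2.7202.
Proof.
  unfold Tc. pose proof exp98. lra.
Qed.

Lemma mass s K : 0 < s -> 3/2*s <= K ->
  RInt (normal_density 0 s) (- K) K <= s / (s * sqrt (2 * PI)) * Tc.
Proof.
  intros Hs HK.
  pose proof (mid s Hs). pose proof (tailR s K Hs HK). pose proof (tailL s K Hs HK).
  rewrite <- (RInt_Chasles (normal_density 0 s) (- K) (- (3/2*s)) K) by (apply nd_ex; lra).
  rewrite <- (RInt_Chasles (normal_density 0 s) (- (3/2*s)) (3/2*s) K) by (apply nd_ex; lra).
  unfold plus; simpl. unfold Tc. lra.
Qed.

Lemma nd_shift s th z : normal_density th s (z + th) = normal_density 0 s z.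
Proof. unfold normal_density. f_equal. f_equal. f_equal. f_equal. ring. Qed.

Lemma nd_nonneg s th z : 0 < s -> 0 <= normal_density th s z.
Proof.
  intros Hs. pose proof sqrt2PI_pos. unfold normal_density.
  apply Rmult_le_pos. left; apply exp_pos. left; apply Rinv_0_lt_compat; nra.
Qed.

Lemma ex2_0 s : 0 < s -> ex2 s 0 = 1.
Proof. intros Hs. unfold ex2. rewrite <- exp_0. apply exp_eq. field. lra. Qed.

Lemma diff_bound (f : R -> R) s th K : 0 < s -> 3/2*s <= K ->
  (forall z, Rabs (f (z + th) - f z) <= 2 * Rabs th * Rabs z + th ^ 2) ->
  ex_RInt (fun y => f y * normal_density th s y) (- K + th) (K + th) ->
  ex_RInt (fun y => f y * normal_density 0 s y) (- K) K ->
  Rabs (RInt (fun y => f y * normal_density th s y) (- K + th) (K + th)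
        - RInt (fun y => f y * normal_density 0 s y) (- K) K)
  <= 4 * Rabs th * (s ^ 2 / (s * sqrt (2 * PI))) + th ^ 2 * (s / (s * sqrt (2 * PI)) * Tc).
Proof.
  intros Hs HK Hf Ex1 Ex0.
  pose proof sqrt2PI_pos as Hp.
  set (g := fun y => f y * normal_density th s y) in *.
  set (h0 := fun y => f y * normal_density 0 s y) in *.
  set (h1 := fun z => f (z + th) * normal_density 0 s z).
  assert (Ex1' : ex_RInt g (1 * (- K) + th) (1 * K + th)) by (rewrite !Rmult_1_l; exact Ex1).
  assert (Eq1 : RInt g (- K + th) (K + th) = RInt h1 (- K) K).
  { transitivity (RInt g (1 * (- K) + th) (1 * K + th)). rewrite !Rmult_1_l; reflexivity.
    rewrite <- (RInt_comp_lin g 1 th (- K) K Ex1').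
    apply RInt_ext. intros x _. unfold g, h1, scal; simpl; unfold mult; simpl.
    rewrite !Rmult_1_l, nd_shift. reflexivity. }
  assert (Eh1 : ex_RInt h1 (- K) K).
  { pose proof (ex_RInt_comp_lin g 1 th (- K) K Ex1') as H.
    revert H. apply ex_RInt_ext.
    intros x _. unfold g, h1, scal; simpl; unfold mult; simpl.
    rewrite !Rmult_1_l, nd_shift. reflexivity. }
  rewrite Eq1.
  set (c := / (s * sqrt (2 * PI))).
  assert (Hc : 0 < c) by (unfold c; apply Rinv_0_lt_compat; nra).
  set (B := fun z => (2 * Rabs th * Rabs z + th ^ 2) * normal_density 0 s z).
  assert (HBr : is_RInt B 0 K (2 * Rabs th * (s ^ 2 / (s * sqrt (2 * PI)) * (ex2 s 0 - ex2 s K))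
                               + th ^ 2 * RInt (normal_density 0 s) 0 K)).
  { pose proof (lin2 _ _ 0 K _ _ (2 * Rabs th) (th ^ 2) (is_RInt_znd s 0 K Hs)
       (RInt_correct _ 0 K (nd_ex s 0 0 K Hs))) as H.
    revert H. apply is_RInt_ext.
    intros x Hx. rewrite Rmin_left, Rmax_right in Hx by lra. unfold B.
    rewrite (Rabs_right x) by lra. match goal with |- ?a = ?b => change (@eq R a b) end. ring. }
  assert (HBl : is_RInt B (- K) 0 (- (2 * Rabs th) * (s ^ 2 / (s * sqrt (2 * PI)) * (ex2 s (- K) - ex2 s 0))
                               + th ^ 2 * RInt (normal_density 0 s) (- K) 0)).
  { pose proof (lin2 _ _ (- K) 0 _ _ (- (2 * Rabs th)) (th ^ 2) (is_RInt_znd s (- K) 0 Hs)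
       (RInt_correct _ (- K) 0 (nd_ex s 0 (- K) 0 Hs))) as H.
    revert H. apply is_RInt_ext.
    intros x Hx. rewrite Rmin_left, Rmax_right in Hx by lra. unfold B.
    rewrite (Rabs_left x) by lra. match goal with |- ?a = ?b => change (@eq R a b) end. ring. }
  pose proof (is_RInt_Chasles _ _ _ _ _ _ HBl HBr) as HB.
  set (VB := plus _ _) in HB.
  assert (HVB : VB <= 4 * Rabs th * (s ^ 2 / (s * sqrt (2 * PI))) + th ^ 2 * (s / (s * sqrt (2 * PI)) * Tc)).
  { unfold VB, plus; simpl. replace (s * (s * 1)) with (s ^ 2) by ring. replace (th * (th * 1)) with (th ^ 2) by ring.
    pose proof (mass s K Hs HK) as HM.
    rewrite <- (RInt_Chasles (normal_density 0 s) (- K) 0 K) in HM by (apply nd_ex; lra).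
    unfold plus in HM; simpl in HM.
    rewrite ex2_0 by lra.
    pose proof (ex2_pos s K). pose proof (ex2_pos s (- K)).
    pose proof (Rabs_pos th).
    assert (0 <= s ^ 2 / (s * sqrt (2 * PI))).
    { apply Rmult_le_pos. nra. left. apply Rinv_0_lt_compat. nra. }
    assert (0 <= th ^ 2) by nra.
    set (q := s ^ 2 / (s * sqrt (2 * PI))) in *.
    assert (0 <= Rabs th * q * ex2 s K) by (apply Rmult_le_pos; [apply Rmult_le_pos|]; lra).
    assert (0 <= Rabs th * q * ex2 s (- K)) by (apply Rmult_le_pos; [apply Rmult_le_pos|]; lra).
    assert (th ^ 2 * (RInt (normal_density 0 s) (- K) 0 + RInt (normal_density 0 s) 0 K)
            <= th ^ 2 * (s / (s * sqrt (2 * PI)) * Tc)) by (apply Rmult_le_compat_l; lra).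
    lra. }
  assert (ExB : ex_RInt B (- K) K) by (eexists; exact HB).
  assert (HpB : forall x, Rabs ((f (x + th) - f x) * normal_density 0 s x) <= B x).
  { intros x. unfold B. rewrite Rabs_mult, (Rabs_right (normal_density 0 s x)).
    apply Rmult_le_compat_r. apply nd_nonneg; lra. apply Hf.
    apply Rle_ge, nd_nonneg; lra. }
  assert (U1 : RInt h1 (- K) K - RInt h0 (- K) K <= RInt B (- K) K).
  { replace (RInt h1 (- K) K - RInt h0 (- K) K) with (minus (RInt h1 (- K) K) (RInt h0 (- K) K)) by reflexivity.
    rewrite <- RInt_minus by auto.
    apply RInt_le. lra. apply ex_RInt_minus; auto. auto.
    intros x _. unfold minus, plus, opp; simpl.
    assert (E : h1 x + - h0 x = (f (x + th) - f x) * normal_density 0 s x) by (unfold h1, h0; ring).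
    rewrite E.
    pose proof (HpB x). pose proof (Rle_abs ((f (x + th) - f x) * normal_density 0 s x)). lra. }
  assert (U2 : RInt h0 (- K) K - RInt h1 (- K) K <= RInt B (- K) K).
  { replace (RInt h0 (- K) K - RInt h1 (- K) K) with (minus (RInt h0 (- K) K) (RInt h1 (- K) K)) by reflexivity.
    rewrite <- RInt_minus by auto.
    apply RInt_le. lra. apply ex_RInt_minus; auto. auto.
    intros x _. unfold minus, plus, opp; simpl.
    assert (E : h0 x + - h1 x = - ((f (x + th) - f x) * normal_density 0 s x)) by (unfold h1, h0; ring).
    rewrite E.
    pose proof (HpB x). pose proof (Rle_abs (- ((f (x + th) - f x) * normal_density 0 s x))) as H0.
    rewrite Rabs_Ropp in H0. lra. }
  rewrite (is_RInt_unique _ _ _ _ HB) in U1, U2.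
  apply Rabs_le. lra.
Qed.

Lemma PI_lb : 3.14 < PI.
Proof.
  destruct (PI_2_3_7_ineq 1) as [H _].
  simpl in H. unfold tg_alt, PI_2_3_7_tg, Ratan_seq in H. simpl in H.
  lra.
Qed.

Lemma Rmax0_lip a b : Rabs (Rmax a 0 - Rmax b 0) <= Rabs (a - b).
Proof.
  unfold Rmax; repeat destruct Rle_dec; unfold Rabs; repeat destruct Rcase_abs; lra.
Qed.

Lemma pp_lip t th z : Rabs (pos_part ((z + th) ^ 2 - t) - pos_part (z ^ 2 - t))
   <= 2 * Rabs th * Rabs z + th ^ 2.
Proof.
  unfold pos_part. eapply Rle_trans. apply Rmax0_lip.
  replace ((z + th) ^ 2 - t - (z ^ 2 - t)) with (2 * th * z + th ^ 2) by ring.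
  eapply Rle_trans. apply Rabs_triang.
  rewrite !Rabs_mult, (Rabs_right 2) by lra.
  rewrite (Rabs_right (th ^ 2)). lra. apply Rle_ge. nra.
Qed.

Lemma final_alg s th Tc' X : 0 < s -> 0 <= Tc' <= 2.7202 -> 0 <= X ->
  (4 * Rabs th * (s ^ 2 / (s * sqrt (2 * PI))) + th ^ 2 * (s / (s * sqrt (2 * PI)) * Tc')) ^ 2
  <= Rmax (6 * s ^ 2 * th ^ 2 + X) (10 * th ^ 4).
Proof.
  intros Hs [HT0 HT] HX.
  pose proof sqrt2PI_pos as Hp. pose proof PI_lb as Hpi.
  set (p := sqrt (2 * PI)) in *.
  assert (Hp2 : p * p = 2 * PI) by (unfold p; apply sqrt_sqrt; lra).
  set (a := s * Rabs th). set (b := Rabs th * Rabs th).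
  assert (Ha : 0 <= a) by (unfold a; pose proof (Rabs_pos th); nra).
  assert (Hb : 0 <= b) by (unfold b; pose proof (Rabs_pos th); nra).
  assert (Eb : th ^ 2 = b) by (unfold b; rewrite <- Rabs_mult; rewrite Rabs_right; [ring| apply Rle_ge; nra]).
  set (D := 4 * Rabs th * (s ^ 2 / (s * p)) + th ^ 2 * (s / (s * p) * Tc')).
  assert (ED : D * p = 4 * a + Tc' * b).
  { unfold D, a. rewrite Eb. field. split; lra. }
  assert (HD0 : 0 <= D).
  { apply (Rmult_le_reg_r p). lra. rewrite ED. nra. }
  destruct (Rle_lt_dec b (0.777 * a)) as [Hc | Hc].
  - assert (H1 : D * p <= 6.114 * a) by nra.
    assert (H2 : (D * p) ^ 2 <= 6 * (p * p) * a ^ 2).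
    { assert (0 <= D * p) by nra.
      assert ((D * p) ^ 2 <= (6.114 * a) ^ 2) by (apply pow_incr; lra).
      rewrite Hp2. assert (0 <= a ^ 2) by nra. nra. }
    assert (H3 : D ^ 2 <= 6 * a ^ 2).
    { assert (0 < p * p) by nra. 
      apply (Rmult_le_reg_r (p * p)). lra. nra. }
    eapply Rle_trans. exact H3. eapply Rle_trans. 2: apply Rmax_l.
    assert (a ^ 2 = s ^ 2 * th ^ 2) by (unfold a; rewrite <- (pow2_abs th); ring). lra.
  - assert (H1 : D * p <= 7.869 * b).
    { rewrite ED. assert (4 * a <= 5.1481 * b) by nra. nra. }
    assert (H2 : (D * p) ^ 2 <= 10 * (p * p) * b ^ 2).
    { assert (0 <= D * p) by nra.
      assert ((D * p) ^ 2 <= (7.869 * b) ^ 2) by (apply pow_incr; lra).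
      rewrite Hp2. assert (0 <= b ^ 2) by nra. nra. }
    assert (H3 : D ^ 2 <= 10 * b ^ 2).
    { assert (0 < p * p) by nra.
      apply (Rmult_le_reg_r (p * p)). lra. nra. }
    eapply Rle_trans. exact H3. eapply Rle_trans. 2: apply Rmax_r.
    rewrite <- Eb. right. ring.
Qed.

Lemma Tc_pos : 0 <= Tc.
Proof. unfold Tc. pose proof (exp_pos (- (9/8))). lra. Qed.

Theorem lemma2 (theta sigma tau E theta0 : R) :
  0 < sigma -> 1 <= tau ->
  normal_expectation theta sigma (fun y => pos_part (y ^ 2 - sigma ^ 2 * tau)) E ->
  normal_expectation 0 sigma (fun y => pos_part (y ^ 2 - sigma ^ 2 * tau)) theta0 ->
  (E - theta0) ^ 2 <=
    Rmax (6 * sigma ^ 2 * theta ^ 2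
          + sigma ^ 4 * ((4 * sqrt tau + 18) / exp (tau / 2)))
         (10 * theta ^ 4).
Proof.
  intros Hs Ht HE H0.
  unfold normal_expectation, improper_integral_R in HE, H0.
  set (f := fun y => pos_part (y ^ 2 - sigma ^ 2 * tau)) in *.
  set (D := 4 * Rabs theta * (sigma ^ 2 / (sigma * sqrt (2 * PI)))
            + theta ^ 2 * (sigma / (sigma * sqrt (2 * PI)) * Tc)).
  assert (Hf : forall z, Rabs (f (z + theta) - f z) <= 2 * Rabs theta * Rabs z + theta ^ 2).
  { intros z. apply pp_lip. }
  assert (HD : Rabs (E - theta0) <= D).
  { destruct (Rle_lt_dec (Rabs (E - theta0)) D) as [h|h]; auto.
    exfalso.
    set (eps := (Rabs (E - theta0) - D) / 2).
    assert (He : 0 < eps) by (unfold eps; lra).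
    destruct (HE eps He) as [M1 HM1]. destruct (H0 eps He) as [M2 HM2].
    set (K := Rmax (Rmax (Rabs M1 + Rabs theta) (Rabs M2)) (3/2*sigma)).
    assert (K1 : Rabs M1 + Rabs theta <= K) by (unfold K; eapply Rle_trans; [apply Rmax_l|apply Rmax_l]).
    assert (K2 : Rabs M2 <= K) by (unfold K; eapply Rle_trans; [apply Rmax_r|apply Rmax_l]).
    assert (K3 : 3/2*sigma <= K) by (unfold K; apply Rmax_r).
    pose proof (Rle_abs M1) as A1. pose proof (Rle_abs (- M1)) as A2. rewrite Rabs_Ropp in A2.
    pose proof (Rle_abs M2) as A3. pose proof (Rle_abs (- M2)) as A4. rewrite Rabs_Ropp in A4.
    pose proof (Rle_abs theta) as A5. pose proof (Rle_abs (- theta)) as A6. rewrite Rabs_Ropp in A6.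
    destruct (HM1 (- K + theta) (K + theta)) as [pr1 Hpr1]; [lra|lra|].
    destruct (HM2 (- K) K) as [pr2 Hpr2]; [lra|lra|].
    pose proof (diff_bound f sigma theta K Hs K3 Hf (ex_RInt_Reals_1 _ _ _ pr1) (ex_RInt_Reals_1 _ _ _ pr2)) as Hd.
    rewrite (RInt_Reals (fun y => f y * normal_density theta sigma y) _ _ pr1), (RInt_Reals (fun y => f y * normal_density 0 sigma y) _ _ pr2) in Hd.
    fold D in Hd.
    pose proof (Rabs_triang (E - RiemannInt pr1) (RiemannInt pr1 - theta0)) as T1.
    pose proof (Rabs_triang (RiemannInt pr1 - RiemannInt pr2) (RiemannInt pr2 - theta0)) as T2.
    replace (E - RiemannInt pr1 + (RiemannInt pr1 - theta0)) with (E - theta0) in T1 by ring.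
    replace (RiemannInt pr1 - RiemannInt pr2 + (RiemannInt pr2 - theta0)) with (RiemannInt pr1 - theta0) in T2 by ring.
    rewrite <- Rabs_Ropp in Hpr1. replace (- (RiemannInt pr1 - E)) with (E - RiemannInt pr1) in Hpr1 by ring.
    unfold eps, f in *. cbv beta in *. lra. }
  assert (HX : 0 <= sigma ^ 4 * ((4 * sqrt tau + 18) / exp (tau / 2))).
  { apply Rmult_le_pos. pose proof (pow_lt sigma 4 Hs). lra.
    apply Rmult_le_pos. pose proof (sqrt_pos tau). lra. left. apply Rinv_0_lt_compat, exp_pos. }
  eapply Rle_trans. 2: apply (final_alg sigma theta Tc _ Hs (conj Tc_pos Tc_bound) HX).
  fold D. rewrite <- (pow2_abs (E - theta0)). apply pow_incr. split. apply Rabs_pos. exact HD.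
Qed.
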